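(* The set $\mathcal{IFR}$ of relay rules (Relay Introduction, Relay Fusion, Relay Reversal) preserves weak connectivity: if any rule of $\mathcal{IFR}$ is applied to a weakly connected (valid) relay graph $G$, then the resulting relay graph $G'$ is also weakly connected.
   Context: Relay model. There is a set $P$ of processes. Each process owns a set of relays (owned non-transferably). Every relay $r$ has exactly one outgoing connection: either $r$ is a sink relay (its messages are delivered to its owning process) or its outgoing connection points to another relay. Following outgoing connections from any relay never cycles and ends at a unique sink relay; the owner of that sink relay is called the sink process of $r$. A process $u$ ''has a relay $r$ to'' a process $v$ if $u$ owns $r$ (or a message in transit to $u$ will give it such a relay upon receipt) and $v$ is the sink process of $r$. $\mathrm{incoming}(r)$ is the number of connections into $r$ (relays pointing to $r$, including pending ones created by references to $r$ in transit); $\mathrm{same\text{-}target}(r,r')$ holds iff $r$ and $r'$ have the same outgoing target. A process may at any time create a new sink relay with no incoming connections. When a process $u$ sends (a reference to) a relay $s$ it owns via a relay $r$ it owns, the message travels along the chain of relays starting at $r$; upon receipt, the sink process of $r$ obtains a new relay $s'$ whose outgoing connection points to $s$ (so $\mathrm{incoming}(s)$ increases). Deleting a relay removes it and its outgoing connection (after pending messages have been delivered). Merging relays with the same target and no incoming connections replaces them by a single relay with that target. Relay graph: directed graph with vertex set $P\cup R$ ($R$ the set of relays) and edges: $(v,r)$ if process $v$ owns relay $r$; $(r,w)$ for relays $r,w$ if the outgoing connection of $r$ points to $w$; $(r,w)$ for a sink relay $r$ and its owning process $w$ (explicit edges); and an implicit edge $(r,w)$ between relays if a message waiting in $r$'s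 outgoing buffer contains a reference to $w$. Weak connectivity refers to the underlying undirected graph. Rules $\mathcal{IFR}$: (Relay Introduction) if $u$ has a relay $r$ to $v$ and a relay $s$ to $w$, then $u$ may send $s$ to $v$ via $r$ (keeping all relays). (Relay Fusion) if $u$ has two relays $r,r'$ with $\mathrm{same\text{-}target}(r,r')$, $u$ may merge them. (Relay Reversal) if $u$ has two relays $r\neq s$ with $\mathrm{incoming}(r)=0$, $u$ may send $s$ via $r$ and subsequently delete $r$. *)

(* Defs.v *)
From mathcomp Require Import all_boot.
From Stdlib Require Import Relations.Relation_Operators.

Set Implicit Arguments.
Unset Strict Implicit.
Unset Printing Implicit Defensive.

(* A relay graph (global state) over a set of processes P.
   Relays are identified by natural numbers; [relays] lists the existing ones.
   [owner r]  : the process owning relay r;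
   [target r] : None if r is a sink relay, Some w if r's outgoing connection
                points to relay w;
   [buffer r] : the relay references contained in the messages waiting in
                r's outgoing buffer. *)
Record relay_graph (P : Type) := RelayGraph {
  relays : seq nat;
  owner  : nat -> P;
  target : nat -> option nat;
  buffer : nat -> seq nat
}.

Inductive vertex (P : Type) := VProc of P | VRelay of nat.
Arguments VProc {P} _.
Arguments VRelay {P} _.

Definition is_vertex (P : Type) (G : relay_graph P) (x : vertex P) : Prop :=
  match x with VProc _ => True | VRelay r => r \in relays G end.

Inductive edge (P : Type) (G : relay_graph P) : vertex P -> vertex P -> Prop :=
| E_own r : r \in relays G -> edge G (VProc (owner G r)) (VRelay r)
| E_out r w : r \in relays G -> w \in relays G -> target G r = Some w ->
    edge G (VRelay r) (VRelay w)
| E_sink r : r \in relays G -> target G r = None ->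
    edge G (VRelay r) (VProc (owner G r))
| E_impl r w : r \in relays G -> w \in relays G -> w \in buffer G r ->
    edge G (VRelay r) (VRelay w).

Definition weakly_connected (P : Type) (G : relay_graph P) : Prop :=
  forall x y, is_vertex G x -> is_vertex G y ->
    clos_refl_sym_trans (vertex P) (edge G) x y.

(* [sink_of G r v]: following outgoing connections from r ends at a sink
   relay owned by v (inductive, hence finite: no cycle). *)
Inductive sink_of (P : Type) (G : relay_graph P) : nat -> P -> Prop :=
| SO_here r : r \in relays G -> target G r = None -> sink_of G r (owner G r)
| SO_step r w v : r \in relays G -> target G r = Some w -> sink_of G w v ->
    sink_of G r v.

Definition valid (P : Type) (G : relay_graph P) : Prop :=
  [/\ uniq (relays G),
      (forall r w, r \in relays G -> target G r = Some w -> w \in relays G),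
      (forall r w, r \in relays G -> w \in buffer G r -> w \in relays G) &
      (forall r, r \in relays G -> exists v, sink_of G r v)].

Definition has_relay (P : Type) (G : relay_graph P) (u : P) (r : nat) (v : P)
  : Prop := [/\ r \in relays G, owner G r = u & sink_of G r v].

(* incoming(r): relays pointing to r plus pending connections created by
   references to r in transit. *)
Definition incoming (P : Type) (G : relay_graph P) (r : nat) : nat :=
  count (fun x => target G x == Some r) (relays G)
  + sumn [seq count_mem r (buffer G x) | x <- relays G].

Definition same_target (P : Type) (G : relay_graph P) (r r' : nat) : Prop :=
  target G r = target G r'.

Definition upd (T : Type) (f : nat -> T) (a : nat) (b : T) : nat -> T :=
  fun x => if x == a then b else f x.

(* Relay Introduction: s is sent via r (message with a reference to s put
   into r's outgoing buffer); all relays are kept. *)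
Definition intro_result (P : Type) (G : relay_graph P) (r s : nat) :=
  RelayGraph (relays G) (owner G) (target G)
             (upd (buffer G) r (rcons (buffer G r) s)).

Definition fuse_result (P : Type) (G : relay_graph P) (u : P) (r r' n : nat) :=
  RelayGraph (n :: [seq x <- relays G | (x != r) && (x != r')])
             (upd (owner G) n u)
             (upd (target G) n (target G r))
             (upd (buffer G) n (buffer G r ++ buffer G r')).

(* Relay Reversal: s is sent via r, then r is deleted after its pending
   messages (the old ones and the new one) have been delivered: the sink
   process v of r obtains, for each reference x in those messages, a fresh
   relay (from ns) pointing to x. *)
Definition rev_result (P : Type) (G : relay_graph P) (r s : nat) (v : P)
    (ns : seq nat) :=
  let msgs := rcons (buffer G r) s in
  RelayGraph (ns ++ [seq x <- relays G | x != r])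
             (fun x => if x \in ns then v else owner G x)
             (fun x => if x \in ns then Some (nth 0 msgs (index x ns))
                       else target G x)
             (fun x => if x \in ns then [::] else buffer G x).

Inductive ifr_step (P : Type) (G : relay_graph P) : relay_graph P -> Prop :=
| IFR_intro u r v s w :
    has_relay G u r v -> has_relay G u s w ->
    ifr_step G (intro_result G r s)
| IFR_fuse u r r' v v' n :
    has_relay G u r v -> has_relay G u r' v' -> r != r' ->
    same_target G r r' -> incoming G r = 0 -> incoming G r' = 0 ->
    n \notin relays G ->
    ifr_step G (fuse_result G u r r' n)
| IFR_rev u r s v w ns :
    has_relay G u r v -> has_relay G u s w -> r != s ->
    incoming G r = 0 ->
    size ns = (size (buffer G r)).+1 -> uniq ns ->
    all (fun n => n \notin relays G) ns ->
    ifr_step G (rev_result G r s v ns).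

(* Main.v *)
Require Import Defs.
From mathcomp Require Import all_boot.
From Stdlib Require Import Relations.Relation_Operators.
From mathcomp Require Import zify.
From Stdlib Require Import Lia.

Section Aux.
Variable P : Type.
Notation crst G := (clos_refl_sym_trans (vertex P) (edge G)).

Lemma inc0 (G : relay_graph P) r x : incoming G r = 0 -> x \in relays G ->
  target G x <> Some r /\ r \notin buffer G x.
Proof.
rewrite /incoming; move: (relays G) => l.
elim: l => [|y l IH] //= H; rewrite inE => /orP[/eqP->|Hx].
  move: H; case: eqP => [//|Ht] /= H; split => //.
  rewrite -has_pred1 has_count -leqNgt leqn0; move: H; move/eqP; rewrite !addn_eq0 => /andP[_ /andP[-> _]] //.
move/eqP: H; rewrite !addn_eq0 => /andP[/andP[_ /eqP H1] /andP[_ /eqP H2]]; apply: (IH _ Hx); by rewrite H1 H2.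
Qed.

Lemma crst_map (G G' : relay_graph P) f x y :
  (forall a b, edge G a b -> crst G' (f a) (f b)) ->
  crst G x y -> crst G' (f x) (f y).
Proof.
move=> He; elim=> [a b /He //|a|a b _ IH|a b c _ IH1 _ IH2].
- exact: rst_refl.
- exact: rst_sym.
- exact: rst_trans IH1 IH2.
Qed.

Lemma transfer (G G' : relay_graph P) f :
  (forall a b, edge G a b -> crst G' (f a) (f b)) ->
  (forall y, is_vertex G' y -> exists x, is_vertex G x /\ crst G' (f x) y) ->
  weakly_connected G -> weakly_connected G'.
Proof.
move=> He Hp Hw y1 y2 H1 H2.
have [x1 [Hx1 C1]] := Hp _ H1; have [x2 [Hx2 C2]] := Hp _ H2.
apply: rst_trans (rst_sym _ _ _ _ C1) _.
apply: rst_trans C2.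
exact: crst_map (Hw _ _ Hx1 Hx2).
Qed.

Definition vmap (fF : nat -> nat) (x : vertex P) : vertex P :=
  match x with VProc p => VProc p | VRelay k => VRelay (fF k) end.

Lemma hom_edges (G G' : relay_graph P) fF :
  (forall k, k \in relays G -> fF k \in relays G') ->
  (forall k, k \in relays G -> owner G' (fF k) = owner G k) ->
  (forall k, k \in relays G -> target G' (fF k) = omap fF (target G k)) ->
  (forall k w, k \in relays G -> w \in buffer G k -> fF w \in buffer G' (fF k)) ->
  forall a b, edge G a b -> crst G' (vmap fF a) (vmap fF b).
Proof.
move=> Hr Ho Ht Hb a b; case=> [k Hk|k w Hk Hw Htk|k Hk Htk|k w Hk Hw Hwb];
  apply: rst_step => /=.
- rewrite -Ho //; exact: E_own (Hr _ Hk).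
- apply: E_out; [exact: Hr|exact: Hr|by rewrite Ht // Htk].
- rewrite -Ho //; apply: E_sink; [exact: Hr|by rewrite Ht // Htk].
- apply: E_impl; [exact: Hr|exact: Hr|exact: Hb].
Qed.


Lemma vmap_id x : vmap id x = x.
Proof. by case: x. Qed.

Lemma case_intro (G : relay_graph P) r s :
  weakly_connected G -> weakly_connected (intro_result G r s).
Proof.
apply: (@transfer _ _ (vmap id)).
  apply: hom_edges => //=.
  - by move=> k _; case: (target G k).
  - move=> k w _ Hw; rewrite /upd; case: ifP => // /eqP E; rewrite E in Hw.
    by rewrite mem_rcons inE Hw orbT.
move=> y Hy; exists y; split; first by case: y Hy.
rewrite vmap_id; exact: rst_refl.
Qed.

Lemma case_fuse (G : relay_graph P) u r r' v v' n :
  valid G -> has_relay G u r v -> has_relay G u r' v' ->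
  same_target G r r' -> incoming G r = 0 -> incoming G r' = 0 ->
  n \notin relays G ->
  weakly_connected G -> weakly_connected (fuse_result G u r r' n).
Proof.
move=> [_ Hvt Hvb _] [Hr Hor _] [Hr' Hor' _] Hst Hi Hi' Hn.
set fF := fun k => if (k == r) || (k == r') then n else k.
have Hkn : forall k, k \in relays G -> k != n.
  by move=> k Hk; apply/eqP => E; rewrite -E Hk in Hn.
have Hfix : forall k, k \in relays G -> k <> r -> k <> r' -> fF k = k.
  by move=> k _ H1 H2; rewrite /fF; do 2 case: eqP => //.
have Hin : forall k, k \in relays G -> k <> r -> k <> r' ->
    k \in relays (fuse_result G u r r' n).
  move=> k Hk H1 H2; rewrite /= inE mem_filter Hk.
  by rewrite andbT; apply/orP; right; apply/andP; split; apply/eqP.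
have Hnr : forall k w, k \in relays G -> (target G k = Some w \/ w \in buffer G k) ->
    [/\ w \in relays G, w <> r & w <> r'].
  move=> k w Hk [Ht|Hb].
    have [A _] := inc0 _ _ _ Hi Hk; have [B _] := inc0 _ _ _ Hi' Hk.
    by split; [exact: Hvt Ht| move=> E; apply: A; rewrite -E | move=> E; apply: B; rewrite -E].
  have [_ A] := inc0 _ _ _ Hi Hk; have [_ B] := inc0 _ _ _ Hi' Hk.
  split; [exact: Hvb Hb| move=> E; rewrite -E Hb in A => // | move=> E; rewrite -E Hb in B => //].
apply: (@transfer _ _ (vmap fF)).
  apply: hom_edges => k Hk.
  - rewrite /fF; case: ifP => H; first by rewrite /= inE eqxx.
    by apply: Hin => // E; rewrite E eqxx ?orbT in H.
  - rewrite /fF /=; case: ifP => H; first by rewrite /upd eqxx; case/orP: H => /eqP ->.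
    by rewrite /upd (negbTE (Hkn _ Hk)).
  - have Hw : forall w, target G k = Some w -> fF w = w.
      by move=> w Ht; have [A B C] := Hnr k w Hk (or_introl Ht); apply: Hfix.
    have Htk : target (fuse_result G u r r' n) (fF k) = target G k.
      rewrite /fF /=; case: ifP => H.
        by rewrite /upd eqxx; case/orP: H => /eqP ->.
      by rewrite /upd (negbTE (Hkn _ Hk)).
    rewrite Htk; case E: (target G k) => [w|] //=; by rewrite Hw.
  - move=> Hk' Hb; rename Hk into w; rename Hk' into Hk; have [A B C] := Hnr k w Hk (or_intror Hb); rewrite Hfix //.
    rewrite /fF /=; case: ifP => H.
      by rewrite /upd eqxx mem_cat; case/orP: H => /eqP E; rewrite -E Hb ?orbT.
    by rewrite /upd (negbTE (Hkn _ Hk)).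
move=> [p|k] Hy.
  by exists (VProc p); split => //; exact: rst_refl.
move: Hy; rewrite /= inE mem_filter => /orP[/eqP ->|/andP[/andP[H1 H2] Hk]].
  exists (VRelay r); split => //=; rewrite /fF eqxx; exact: rst_refl.
have E1 : k <> r by apply/eqP.
have E2 : k <> r' by apply/eqP.
exists (VRelay k); split => //=; rewrite Hfix //; exact: rst_refl.
Qed.

Lemma sink_step (G : relay_graph P) r w v :
  sink_of G r v -> target G r = Some w -> sink_of G w v.
Proof.
by case=> [r0 _ E|r0 w0 v0 _ E H]; rewrite E // => -[<-].
Qed.

Lemma case_rev (G : relay_graph P) u r s v w ns :
  valid G -> has_relay G u r v -> has_relay G u s w -> r != s ->
  incoming G r = 0 ->
  size ns = (size (buffer G r)).+1 -> uniq ns ->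
  all (fun n => n \notin relays G) ns ->
  weakly_connected G -> weakly_connected (rev_result G r s v ns).
Proof.
move=> [_ Hvt Hvb _] [Hr Hor Hsv] [Hs Hos _] Hrs Hi Hsz Hu Hall.
set G' := rev_result G r s v ns.
set msgs := rcons (buffer G r) s.
have Hold : forall k, k \in relays G -> k \notin ns.
  move=> k Hk; apply/negP => Hn; have := allP Hall k Hn; by rewrite Hk.
have Hin' : forall k, k \in relays G -> k <> r -> k \in relays G'.
  move=> k Hk Hkr; rewrite /= mem_cat mem_filter Hk; apply/orP; right.
  by rewrite andbT; apply/eqP.
have Ho' : forall k, k \in relays G -> owner G' k = owner G k.
  by move=> k Hk; rewrite /= (negbTE (Hold k Hk)).
have Ht' : forall k, k \in relays G -> target G' k = target G k.
  by move=> k Hk; rewrite /= (negbTE (Hold k Hk)).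
have Hb' : forall k, k \in relays G -> buffer G' k = buffer G k.
  by move=> k Hk; rewrite /= (negbTE (Hold k Hk)).
have Hmsgs : forall b, b \in msgs -> b \in relays G /\ b <> r.
  move=> b; rewrite mem_rcons inE => /orP[/eqP ->|Hb].
    by split => // E; rewrite E eqxx in Hrs.
  split; first exact: Hvb Hb.
  by move=> E; have [_ A] := inc0 _ _ _ Hi Hr; rewrite E in Hb; rewrite Hb in A.
have HA : forall b, b \in msgs -> crst G' (VRelay b) (VProc v).
  move=> b Hb; have [Hbr Hbnr] := Hmsgs b Hb.
  have Hi0 : index b msgs < size ns by rewrite Hsz -(size_rcons _ s) index_mem.
  set n := nth 0 ns (index b msgs).
  have Hn : n \in ns := mem_nth 0 Hi0.
  have Hidx : index n ns = index b msgs := index_uniq 0 Hi0 Hu.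
  apply: (@rst_trans _ _ _ (VRelay n)).
    apply: rst_sym; apply: rst_step; apply: E_out.
    - by rewrite /= mem_cat Hn.
    - exact: Hin'.
    - by rewrite /= Hn Hidx nth_index.
  apply: rst_sym; apply: rst_step.
  have -> : v = owner G' n by rewrite /= Hn.
  apply: E_own; by rewrite /= mem_cat Hn.
have HB : forall x v', sink_of G x v' -> x <> r -> crst G' (VRelay x) (VProc v').
  move=> x v'; elim=> {x v'} [x Hx Htx|x y v' Hx Htx _ IH] Hxr.
    apply: rst_step; rewrite -Ho' //; apply: E_sink; first exact: Hin'.
    by rewrite Ht'.
  have Hyr : y <> r.
    by move=> E; have [A _] := inc0 _ _ _ Hi Hx; apply: A; rewrite -E.
  apply: (@rst_trans _ _ _ (VRelay y)); last exact: IH.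
  apply: rst_step; apply: E_out; [exact: Hin'|apply: Hin' => //; exact: Hvt Htx|].
  by rewrite Ht'.
have HC : crst G' (VProc u) (VProc v).
  apply: (@rst_trans _ _ _ (VRelay s)).
    apply: rst_step; rewrite -Hos -(Ho' s Hs); apply: E_own; apply: Hin' => //.
    by move=> E; rewrite E eqxx in Hrs.
  by apply: HA; rewrite /msgs mem_rcons mem_head.
pose f := fun x : vertex P => match x with VProc p => VProc p
  | VRelay k => if k == r then VProc v else VRelay k end.
apply: (@transfer _ _ f).
  move=> a b; case=> [k Hk|k x Hk Hx Htk|k Hk Htk|k x Hk Hx Hxb] /=;
    case: (eqVneq k r) => [E|Hkr].
  - by rewrite E Hor.
  - by apply: rst_step; rewrite -Ho' //; apply: E_own; apply: Hin' => // E'; rewrite E' eqxx in Hkr.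
  - have Hxr : x != r.
      by apply/eqP => E'; have [A _] := inc0 _ _ _ Hi Hk; apply: A; rewrite -E'.
    rewrite (negbTE Hxr); apply: rst_sym; apply: HB; last exact/eqP.
    apply: (@sink_step G r x v Hsv); by rewrite -E.
  - have Hxr : x != r.
      by apply/eqP => E'; have [A _] := inc0 _ _ _ Hi Hk; apply: A; rewrite -E'.
    rewrite (negbTE Hxr); apply: rst_step; apply: E_out.
    + by apply: Hin' => // E'; rewrite E' eqxx in Hkr.
    + by apply: Hin' => // E'; rewrite E' eqxx in Hxr.
    + by rewrite Ht'.
  - rewrite E Hor; exact: rst_sym.
  - apply: rst_step; rewrite -Ho' //; apply: E_sink.
    + by apply: Hin' => // E'; rewrite E' eqxx in Hkr.
    + by rewrite Ht'.
  - have Hxr : x != r.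
      by apply/eqP => E'; have [_ A] := inc0 _ _ _ Hi Hk; rewrite -E' Hxb in A.
    rewrite (negbTE Hxr); apply: rst_sym; apply: HA.
    by rewrite /msgs mem_rcons inE -E Hxb orbT.
  - have Hxr : x != r.
      by apply/eqP => E'; have [_ A] := inc0 _ _ _ Hi Hk; rewrite -E' Hxb in A.
    rewrite (negbTE Hxr); apply: rst_step; apply: E_impl.
    + by apply: Hin' => // E'; rewrite E' eqxx in Hkr.
    + by apply: Hin' => // E'; rewrite E' eqxx in Hxr.
    + by rewrite Hb'.
move=> [p|k] Hy.
  by exists (VProc p); split => //; exact: rst_refl.
move: Hy; rewrite /= mem_cat mem_filter => /orP[Hn|/andP[Hkr Hk]].
  exists (VProc v); split => //=; apply: rst_step.
  have -> : v = owner G' k by rewrite /= Hn.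
  apply: E_own; by rewrite /= mem_cat Hn.
exists (VRelay k); split => //=; rewrite (negbTE Hkr); exact: rst_refl.
Qed.

End Aux.

Theorem theorem5 (P : Type) (G G' : relay_graph P) :
  valid G -> weakly_connected G -> ifr_step G G' -> weakly_connected G'.
Proof.
move=> Hv Hw; case.
- move=> u r v s w _ _; exact: (@case_intro P G r s Hw).
- move=> u r r' v v' n H1 H2 _ Hst Hi Hi' Hn; exact: (@case_fuse P G u r r' v v' n Hv H1 H2 Hst Hi Hi' Hn Hw).
- move=> u r s v w ns H1 H2 Hrs Hi Hsz Hu Hall; exact: (@case_rev P G u r s v w ns Hv H1 H2 Hrs Hi Hsz Hu Hall Hw).
Qed.
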